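(* Consider the linear system $x_{k+1}=Ax_k+Bu_k+w_k$ with $x_k\in\mathbb{R}^n$, $u_k\in\mathbb{R}^d$, $w_k\in\mathcal{W}$, subject to convex polytopic constraints $x_k\in\mathcal{X}$, $u_k\in\mathcal{U}$. Let $K$ and $\mathcal{O}$ satisfy: for all $x\in\mathcal{O}$, $w\in\mathcal{W}$, $(A+BK)x+w\in\mathcal{O}$ and $Kx\in\mathcal{U}$. Let $h:\mathbb{R}^n\times\mathbb{R}^d\to\mathbb{R}$ be a continuous, jointly convex stage cost. Fix $j\ge0$. For each $i\in\{0,\dots,j\}$ let $\pi^i$ be a control policy with values in $\mathcal{U}$, defined on a set $\mathcal{F}^i\subseteq\mathcal{X}$ (and at all points of $\mathcal{SS}^i$ where it is evaluated), and let $x_0^i\in\mathcal{F}^i$. Assume that for every $i\in\{0,\dots,j\}$ and every initial condition in $\mathcal{F}^i$, the closed loop $x_{k+1}=Ax_k+B\pi^i(x_k)+w_k$ satisfies $x_k\in\mathcal{X}$ for all $k$ and $|x_t|_{\mathcal{O}}\to0$ as $t\to\infty$, for every disturbance sequence in $\mathcal{W}$. Then $Q^j$ is a robust control Lyapunov function on $\mathcal{CS}^j$, i.e. for all $x\in\mathcal{CS}^j$, $$\min_{u\in\mathcal{U}}\max_{w\in\mathcal{W}}\big[Q^j(Ax+Bu+w)+h(x,u)-Q^j(x)\big]\le 0.$$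
   Context: $|x|_{\mathcal{O}}=\inf_{d\in\mathcal{O}}\|x-d\|_1$. For $i\ge0$: robust reachable sets $\mathcal{R}_0(x_0^i)=\{x_0^i\}$, $\mathcal{R}_{k+1}(x_0^i)=\{x'\in\mathcal{X}:\exists w\in\mathcal{W},\exists x\in\mathcal{R}_k(x_0^i),\ x'=Ax+B\pi^i(x)+w\}$; safe set $\mathcal{SS}^i=\big(\bigcup_{k\ge0}\mathcal{R}_k(x_0^i)\big)\cup\mathcal{O}$; convex safe set $\mathcal{CS}^j=\mathrm{conv}\big(\bigcup_{i=0}^j\mathcal{SS}^i\big)$. The worst-case cost-to-go $L^i:\mathbb{R}^n\to\mathbb{R}\cup\{+\infty\}$ is $L^i(x)=+\infty$ for $x\notin\mathcal{SS}^i$, and for $x\in\mathcal{SS}^i$ it is the solution of $L^i(x)=\max_{w\in\mathcal{W}}\big[h(x,\pi^i(x))+L^i(Ax+B\pi^i(x)+w)\big]$ (the worst-case cumulative closed-loop cost from $x$ under $\pi^i$). The function $Q^j:\mathcal{CS}^j\to\mathbb{R}$ is $Q^j(x)=\min\{\mu: (x,\mu)\in\mathrm{conv}\big(\bigcup_{i=0}^j\mathrm{epi}(L^i)\big)\}$, where $\mathrm{epi}$ denotes the epigraph. *)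

(* Defs.v *)
From HB Require Import structures.
From mathcomp Require Import all_boot all_order all_algebra.
From mathcomp Require Import all_classical all_reals all_analysis.
Set Implicit Arguments. Unset Strict Implicit. Unset Printing Implicit Defensive.
Import Order.TTheory GRing.Theory Num.Theory.
Import numFieldNormedType.Exports.
Local Open Scope classical_set_scope.
Local Open Scope ring_scope.

Section Defs.
Variable R : realType.

Definition conv (V : lmodType R) (S : set V) : set V :=
  [set y | exists (m : nat) (lam : 'I_m -> R) (p : 'I_m -> V),
      [/\ (forall k, 0 <= lam k), \sum_(k < m) lam k = 1,
          (forall k, S (p k)) & y = \sum_(k < m) lam k *: p k]].

Definition polytope (V : lmodType R) (S : set V) : Prop :=
  exists (m : nat) (p : 'I_m -> V), S = conv (range p).

Variables n d : nat.

Definition norm1 (v : 'cV[R]_n) : R := \sum_(i < n) `|v i ord0|.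

Definition distO (O : set 'cV[R]_n) (x : 'cV[R]_n) : R :=
  inf [set norm1 (x - y) | y in O].

Fixpoint traj (A : 'M[R]_n) (B : 'M[R]_(n, d)) (pi : 'cV[R]_n -> 'cV[R]_d)
    (x0 : 'cV[R]_n) (w : nat -> 'cV[R]_n) (k : nat) : 'cV[R]_n :=
  match k with
  | 0 => x0
  | k'.+1 => let x := traj A B pi x0 w k' in A *m x + B *m pi x + w k'
  end.

Fixpoint reach (A : 'M[R]_n) (B : 'M[R]_(n, d)) (X W : set 'cV[R]_n)
    (pi : 'cV[R]_n -> 'cV[R]_d) (x0 : 'cV[R]_n) (k : nat) : set 'cV[R]_n :=
  match k with
  | 0 => [set x0]
  | k'.+1 => [set x' | X x' /\ exists2 w, W w &
                exists2 x, reach A B X W pi x0 k' x & x' = A *m x + B *m pi x + w]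
  end.

Definition safe_set A B X W pi x0 (O : set 'cV[R]_n) : set 'cV[R]_n :=
  (\bigcup_(k in [set: nat]) reach A B X W pi x0 k) `|` O.

Definition conv_safe_set A B X W (pi : nat -> 'cV[R]_n -> 'cV[R]_d)
    (x0 : nat -> 'cV[R]_n) O (j : nat) : set 'cV[R]_n :=
  conv (\bigcup_(i in [set i | (i <= j)%N]) safe_set A B X W (pi i) (x0 i) O).

Definition epi (L : 'cV[R]_n -> \bar R) : set ('cV[R]_n * R) :=
  [set p | (L p.1 <= p.2%:E)%E].

Definition conv_epi (L : nat -> 'cV[R]_n -> \bar R) (j : nat) : set ('cV[R]_n * R) :=
  conv (\bigcup_(i in [set i | (i <= j)%N]) epi (L i)).

(* Q^j(x) = min { mu | (x, mu) in conv (U_{i<=j} epi L^i) } (as an infimum;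
   that it is attained is the presupposition of the definition) *)
Definition Qfun (L : nat -> 'cV[R]_n -> \bar R) (j : nat) (x : 'cV[R]_n) : R :=
  inf [set mu | conv_epi L j (x, mu)].

End Defs.

(* Main.v *)
Require Import Defs.
From HB Require Import structures.
From mathcomp Require Import all_boot all_order all_algebra.
From mathcomp Require Import all_classical all_reals all_analysis.
From mathcomp Require Import lra.
Import Order.TTheory GRing.Theory Num.Theory.
Import numFieldNormedType.Exports.
Local Open Scope classical_set_scope.
Local Open Scope ring_scope.

Lemma conv_closed (R : realType) (V : lmodType R) (S : set V) :
  (forall a b (t : R), 0 <= t <= 1 -> S a -> S b -> S (t *: a + (1 - t) *: b)) ->
  forall m (lam : 'I_m -> R) (p : 'I_m -> V), (forall k, 0 <= lam k) ->
  \sum_(k < m) lam k = 1 -> (forall k, S (p k)) -> S (\sum_(k < m) lam k *: p k).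
Proof.
move=> Sc; elim=> [|m IH] lam p l0 l1 Sp.
  by move: l1; rewrite big_ord0 => /eqP; rewrite eq_sym oner_eq0.
rewrite big_ord_recr /=; rewrite big_ord_recr /= in l1.
set t := lam ord_max in l1 *.
set s := \sum_(i < m) lam (widen_ord (leqnSn m) i) in l1.
have s0 : 0 <= s by apply: sumr_ge0 => i _.
have [t1|t1] := eqVneq t 1.
  have s00 : s = 0 by lra.
  have z := psumr_eq0P (fun i _ => l0 (widen_ord (leqnSn m) i)) s00.
  rewrite big1 ?add0r; last by move=> i _; rewrite z // scale0r.
  by rewrite t1 scale1r.
have sp : 0 < s.
  rewrite lt_def; apply/andP; split=> //; apply/eqP => s00.
  by move/eqP: t1; apply; lra.
have Sa : S (\sum_(i < m) (lam (widen_ord (leqnSn m) i) / s) *: p (widen_ord (leqnSn m) i)).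
  apply: IH => //.
  - by move=> k; apply: divr_ge0.
  - by rewrite -mulr_suml -/s divff // gt_eqF.
have st : 0 <= s <= 1 by apply/andP; split; [exact: s0| have : 0 <= t by apply: l0]; lra.
have := Sc _ _ s st Sa (Sp ord_max); rewrite (_ : 1 - s = t); last by lra.
move=> H; rewrite scaler_sumr in H; congr S: H; congr (_ + _); apply: eq_bigr => i _.
by rewrite scalerA mulrCA mulfV ?gt_eqF // mulr1.
Qed.
Lemma conv_bin (R : realType) (V : lmodType R) (S : set V) a b (t : R) :
  0 <= t <= 1 -> Defs.conv S a -> Defs.conv S b -> Defs.conv S (t *: a + (1 - t) *: b).
Proof.
move=> /andP[t0 t1] [m1 [l1 [p1 [l10 l11 Sp1 ->]]]] [m2 [l2 [p2 [l20 l21 Sp2 ->]]]].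
pose lam (i : 'I_(m1 + m2)) := match fintype.split i with inl a => t * l1 a | inr b => (1 - t) * l2 b end.
pose p (i : 'I_(m1 + m2)) := match fintype.split i with inl a => p1 a | inr b => p2 b end.
have sl : forall a : 'I_m1, fintype.split (lshift m2 a) = inl a := fun a => unsplitK (inl a).
have sr : forall b : 'I_m2, fintype.split (rshift m1 b) = inr b := fun b => unsplitK (inr b).
exists (m1 + m2)%N, lam, p; split.
- by move=> k; rewrite /lam; case: fintype.split => c; apply: mulr_ge0 => //; lra.
- rewrite big_split_ord.
  rewrite (eq_bigr (fun i : 'I_m1 => t * l1 i)); last by move=> i _; rewrite /lam sl.
  rewrite (eq_bigr (fun i : 'I_m2 => (1 - t) * l2 i)); last by move=> i _; rewrite /lam sr.
  by rewrite -!mulr_sumr l11 l21 !mulr1 /= addrC subrK.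
- by move=> k; rewrite /p; case: fintype.split.
- rewrite big_split_ord.
  rewrite [in X in _ = X](eq_bigr (fun i : 'I_m1 => (t * l1 i) *: p1 i)); last by move=> i _; rewrite /lam /p sl.
  rewrite [in X in _ = X](eq_bigr (fun i : 'I_m2 => ((1 - t) * l2 i) *: p2 i)); last by move=> i _; rewrite /lam /p sr.
  rewrite !scaler_sumr; congr (_ + _); apply: eq_bigr => i _; by rewrite scalerA.
Qed.

Lemma sum_fst (R : realType) (V1 V2 : lmodType R) m (F : 'I_m -> V1 * V2) :
  (\sum_(k < m) F k).1 = \sum_(k < m) (F k).1.
Proof. by apply: (big_morph fst) => // x y. Qed.
Lemma sum_snd (R : realType) (V1 V2 : lmodType R) m (F : 'I_m -> V1 * V2) :
  (\sum_(k < m) F k).2 = \sum_(k < m) (F k).2.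
Proof. by apply: (big_morph snd) => // x y. Qed.

Theorem proposition2 (R : realType) (n d : nat)
  (A : 'M[R]_n) (B : 'M[R]_(n, d))
  (X : set 'cV[R]_n) (U : set 'cV[R]_d) (W : set 'cV[R]_n)
  (hX : polytope X) (hU : polytope U)
  (K : 'M[R]_(d, n)) (O : set 'cV[R]_n)
  (hO : forall x w, O x -> W w -> O ((A + B *m K) *m x + w) /\ U (K *m x))
  (h : 'cV[R]_n -> 'cV[R]_d -> R)
  (h_cont : continuous (fun p : 'cV[R]_n * 'cV[R]_d => h p.1 p.2))
  (h_conv : forall x1 x2 u1 u2 (t : R), 0 <= t <= 1 ->
     h (t *: x1 + (1 - t) *: x2) (t *: u1 + (1 - t) *: u2)
       <= t * h x1 u1 + (1 - t) * h x2 u2)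
  (j : nat)
  (pi : nat -> 'cV[R]_n -> 'cV[R]_d) (F : nat -> set 'cV[R]_n)
  (x0 : nat -> 'cV[R]_n)
  (hFX : forall i, (i <= j)%N -> F i `<=` X)
  (hpiU : forall i x, (i <= j)%N ->
     (F i `|` safe_set A B X W (pi i) (x0 i) O) x -> U (pi i x))
  (hx0 : forall i, (i <= j)%N -> F i (x0 i))
  (hstab : forall i, (i <= j)%N -> forall x, F i x ->
     forall w : nat -> 'cV[R]_n, (forall k, W (w k)) ->
       (forall k, X (traj A B (pi i) x w k)) /\
       (fun t => distO O (traj A B (pi i) x w t)) @ \oo --> (0 : R))
  (L : nat -> 'cV[R]_n -> \bar R)
  (hL_out : forall i x, (i <= j)%N ->
     ~ safe_set A B X W (pi i) (x0 i) O x -> L i x = +oo%E)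
  (hL_bellman : forall i x, (i <= j)%N ->
     safe_set A B X W (pi i) (x0 i) O x ->
     L i x = ereal_sup [set adde (h x (pi i x))%:E (L i (A *m x + B *m pi i x + w))
                       | w in W])
  (hQ_min : forall x, conv_safe_set A B X W pi x0 O j x ->
     exists mu, conv_epi L j (x, mu) /\
       forall mu', conv_epi L j (x, mu') -> mu <= mu') :
  forall x, conv_safe_set A B X W pi x0 O j x ->
    exists2 u, U u & forall w, W w ->
      conv_safe_set A B X W pi x0 O j (A *m x + B *m u + w) /\
      Qfun L j (A *m x + B *m u + w) + h x u - Qfun L j x <= 0.
Proof.
move=> x CSx.
have [mu [cx mumin]] := hQ_min x CSx.
case: (cx) => [m [lam [p [l0 l1 Sp xe]]]].
have [ik hik] : exists ik : 'I_m -> nat, forall k,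
    (ik k <= j)%N /\ (L (ik k) (p k).1 <= ((p k).2)%:E)%E.
  have H : forall k : 'I_m, exists i, (i <= j)%N /\ (L i (p k).1 <= ((p k).2)%:E)%E.
    by move=> k; case: (Sp k) => i ij e; exists i.
  have [f hf] := choice H.
  by exists f.
have SSk : forall k, safe_set A B X W (pi (ik k)) (x0 (ik k)) O (p k).1.
  move=> k; apply: contrapT => nS; have := (hik k).2.
  by rewrite hL_out //; exact: (hik k).1.
pose u_ k := pi (ik k) (p k).1.
pose u := \sum_(k < m) lam k *: u_ k.
have Uu : U u.
  case: hU => mU [pU UE]; rewrite UE; apply: conv_closed => //.
    by move=> a b t; apply: conv_bin.
  by move=> k; rewrite -UE; apply: hpiU; [exact: (hik k).1| right; exact: SSk].
have x_eq : x = \sum_(k < m) lam k *: (p k).1.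
  by have := congr1 fst xe; rewrite /= sum_fst.
have mu_eq : mu = \sum_(k < m) lam k * (p k).2.
  by have := congr1 snd xe; rewrite /= sum_snd.
exists u => // w Ww.
pose s k := A *m (p k).1 + B *m u_ k + w.
have key : forall k, (L (ik k) (s k) <= ((p k).2 - h (p k).1 (u_ k))%:E)%E.
  move=> k; have := (hik k).2; rewrite hL_bellman //; last exact: (hik k).1.
  move=> le.
  have : ((h (p k).1 (u_ k))%:E + L (ik k) (s k) <= ((p k).2)%:E)%E.
    by apply: le_trans le; apply: ereal_sup_ubound; exists w.
  case: (L (ik k) (s k)) => [r||] //=; rewrite ?lee_fin ?leNye //.
  by move=> H; lra.
have SSs : forall k, safe_set A B X W (pi (ik k)) (x0 (ik k)) O (s k).
  move=> k; apply: contrapT => nS; have := key k.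
  by rewrite hL_out //; exact: (hik k).1.
have succ_eq : A *m x + B *m u + w = \sum_(k < m) lam k *: s k.
  rewrite x_eq /u /s !mulmx_sumr.
  under [RHS]eq_bigr do rewrite !scalerDr.
  rewrite !big_split /= -scaler_suml l1 scale1r.
  by congr (_ + _ + _); apply: eq_bigr => k _; rewrite scalemxAr.
have CSs : conv_safe_set A B X W pi x0 O j (A *m x + B *m u + w).
  rewrite succ_eq; exists m, lam, s; split => // k.
  by exists (ik k); [exact: (hik k).1 | exact: SSs].
split => //.
have [mus [cs musmin]] := hQ_min _ CSs.
pose hk k := h (p k).1 (u_ k).
have Qs : Qfun L j (A *m x + B *m u + w) <= \sum_(k < m) lam k * ((p k).2 - hk k).
  apply: (ge_inf (ex_intro _ mus musmin)).
  exists m, lam, (fun k => (s k, (p k).2 - hk k)); split => //.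
    by move=> k; exists (ik k); [exact: (hik k).1 | exact: key].
  apply: injective_projections; rewrite /= ?sum_fst ?sum_snd //.
have Qx : mu <= Qfun L j x.
  by apply: lb_le_inf; [exists mu | exact: mumin].
have jen : h x u <= \sum_(k < m) lam k * hk k.
  pose E : set (('cV[R]_n * 'cV[R]_d) * R)%type := [set q | h q.1.1 q.1.2 <= q.2].
  have Ebin : forall a b (t : R), 0 <= t <= 1 -> E a -> E b -> E (t *: a + (1 - t) *: b).
    move=> a b t t01 Ea Eb; rewrite /E /=.
    apply: le_trans (h_conv _ _ _ _ _ t01) _.
    move: t01 => /andP[t0 t1].
    by apply: lerD; apply: ler_wpM2l => //; lra.
  have := @conv_closed R _ E Ebin m lam (fun k => (((p k).1, u_ k), hk k)) l0 l1 (fun k => le_refl _).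
  by rewrite /E /= !sum_snd !sum_fst /= -x_eq sum_snd.
rewrite mu_eq in Qx.
have eqS : \sum_(k < m) lam k * ((p k).2 - hk k) =
   \sum_(k < m) lam k * (p k).2 - \sum_(k < m) lam k * hk k.
  by rewrite -sumrB; apply: eq_bigr => k _; rewrite mulrBr.
rewrite eqS in Qs.
lra.
Qed.
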